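(* For every integer $m\ge1$ and every $x\in I$, $$\sum_{i=0}^m\Big|x-\frac{i}{m}\Big|\,\big|b_{i-1,m-1}(x)-b_{i,m-1}(x)\big|=\frac1m.$$
   Context: $I=[0,1]$. $b_{i,m}(t)=\binom{m}{i}t^i(1-t)^{m-i}$ for $i\in\{0,\ldots,m\}$, with the convention $b_{-1,m-1}=b_{m,m-1}=0$. *)

(* Defs.v *)
From Stdlib Require Import Reals Lra Lia ZArith Bool.
Open Scope R_scope.

(* Bernstein basis polynomial b_{i,m}(t) = C(m,i) t^i (1-t)^(m-i) for
   0 <= i <= m, with integer index i so that the convention
   b_{-1,m-1} = b_{m,m-1} = 0 is built in: b is 0 outside 0 <= i <= m. *)
Definition bern (i : Z) (m : nat) (t : R) : R :=
  if andb (0 <=? i)%Z (i <=? Z.of_nat m)%Z then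
    C m (Z.to_nat i) * t ^ (Z.to_nat i) * (1 - t) ^ (m - Z.to_nat i)
  else 0.

(* Main.v *)
Require Import Defs.
From Stdlib Require Import Reals ZArith Lra Lia.
Open Scope R_scope.

Lemma B_in n k x : (k <= n)%nat -> bern (Z.of_nat k) n x = C n k * x^k * (1-x)^(n-k).
Proof. intro H. unfold bern. rewrite Nat2Z.id.
  replace ((0 <=? Z.of_nat k)%Z && (Z.of_nat k <=? Z.of_nat n)%Z)%bool with true; auto.
  symmetry; apply andb_true_intro; split; apply Z.leb_le; lia. Qed.

Lemma B_out n x : bern (Z.of_nat (S n)) n x = 0.
Proof. unfold bern. replace ((Z.of_nat (S n) <=? Z.of_nat n)%Z) with false.
  now rewrite Bool.andb_false_r. symmetry; apply Z.leb_gt; lia. Qed.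

Lemma B_m1 n x : bern (Z.of_nat 0 - 1) n x = 0.
Proof. reflexivity. Qed.

Lemma B_S n k x : bern (Z.of_nat (S k) - 1) n x = bern (Z.of_nat k) n x.
Proof. now replace (Z.of_nat (S k) - 1)%Z with (Z.of_nat k) by lia. Qed.

Lemma C_ratio k p : C (S (k+p)) (S k) * INR (S k) = C (S (k+p)) k * INR (S p).
Proof. unfold C. replace (S (k+p) - S k)%nat with p by lia.
  replace (S (k+p) - k)%nat with (S p) by lia.
  change (fact (S k)) with (S k * fact k)%nat.
  change (fact (S p)) with (S p * fact p)%nat.
  rewrite !mult_INR.
  assert (H1 := INR_fact_neq_0 k). assert (H2 := INR_fact_neq_0 p).
  assert (H3 : INR (S k) <> 0) by (apply not_0_INR; lia).
  assert (H4 : INR (S p) <> 0) by (apply not_0_INR; lia).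
  field; auto. Qed.

Lemma C_nonneg n k : 0 <= C n k.
Proof. unfold C. apply Rmult_le_pos. apply pos_INR.
  apply Rlt_le, Rinv_0_lt_compat, Rmult_lt_0_compat; apply INR_fact_lt_0. Qed.

Lemma sign n x i : 0 <= x <= 1 -> (i <= S n)%nat ->
  (x - INR i / INR (S n)) * (bern (Z.of_nat i - 1) n x - bern (Z.of_nat i) n x) <= 0.
Proof.
  intros Hx Hi. assert (HN : 0 < INR (S n)) by (apply lt_0_INR; lia).
  destruct i as [|k].
  - rewrite B_m1, B_in by lia. simpl INR. rewrite Nat.sub_0_r. simpl.
    unfold C. rewrite Nat.sub_0_r. simpl.
    assert (0 <= (1-x)^n) by (apply pow_le; lra).
    replace (INR (fact n) / (1 * INR (fact n))) with 1 by (field; apply INR_fact_neq_0).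
    replace (0/INR (S n)) with 0 by (field; lra). nra.
  - rewrite B_S. destruct (Nat.eq_dec k n) as [->|Hk].
    + rewrite B_out, B_in by lia. rewrite Nat.sub_diag.
      replace (INR (S n) / INR (S n)) with 1 by (field; lra).
      unfold C. rewrite Nat.sub_diag. simpl.
      replace (INR (fact n) / (INR (fact n) * 1)) with 1 by (field; apply INR_fact_neq_0).
      assert (0 <= x^n) by (apply pow_le; lra). nra.
    + destruct (Nat.le_exists_sub (S k) n ltac:(lia)) as [p [Hp _]].
      replace n with (S (k + p)) by lia.
      rewrite !B_in by lia.
      replace (S (k+p) - k)%nat with (S p) by lia.
      replace (S (k+p) - S k)%nat with p by lia.
      set (a := C (S (k+p)) k).
      assert (Hc : C (S (k+p)) (S k) = a * INR (S p) / INR (S k)).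
      { assert (H3 : INR (S k) <> 0) by (apply not_0_INR; lia).
        unfold a; rewrite <- (C_ratio k p). field. auto. }
      rewrite Hc.
      assert (Hs : INR (S (S (k+p))) = INR (S k) + INR (S p)).
      { rewrite <- plus_INR. f_equal. lia. }
      assert (Ha : 0 <= a) by apply C_nonneg.
      assert (HK : 0 < INR (S k)) by (apply lt_0_INR; lia).
      assert (HP : 0 < INR (S p)) by (apply lt_0_INR; lia).
      assert (Hq : 0 <= x^k * (1-x)^p) by (apply Rmult_le_pos; apply pow_le; lra).
      rewrite Hs. simpl pow.
      set (K := INR (S k)) in *. set (P := INR (S p)) in *.
      set (q := x^k * (1-x)^p) in *.
      replace ((x - K / (K + P)) *
        (a * x ^ k * ((1 - x) * (1 - x) ^ p) - a * P / K * (x * x ^ k) * (1 - x) ^ p))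
        with (- (q * a / (K * (K+P))) * (K - (K+P)*x)^2).
      2:{ unfold q. field. lra. }
      assert (0 <= q * a / (K * (K+P))).
      { apply Rmult_le_pos. nra. apply Rlt_le, Rinv_0_lt_compat. nra. }
      assert (0 <= (K - (K+P)*x)^2) by (apply pow2_ge_0). nra.
Qed.

Theorem mainTheorem6 (m : nat) (x : R) :
  (1 <= m)%nat -> 0 <= x <= 1 ->
  sum_f_R0
    (fun i : nat =>
       Rabs (x - INR i / INR m) *
       Rabs (bern (Z.of_nat i - 1) (m - 1) x - bern (Z.of_nat i) (m - 1) x))
    m
  = 1 / INR m.
Proof.
  intros Hm Hx. destruct m as [|n]; [lia|]. replace (S n - 1)%nat with n by lia.
  assert (HN : 0 < INR (S n)) by (apply lt_0_INR; lia).
  set (f := fun i => (INR i / INR (S n) - x) * bern (Z.of_nat i - 1) n x).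
  set (g := fun i => (INR i / INR (S n) - x) * bern (Z.of_nat i) n x).
  rewrite (sum_eq _ (fun i => f i - g i)).
  2:{ intros i Hi. rewrite <- Rabs_mult, Rabs_left1 by (apply sign; auto).
      unfold f, g. ring. }
  rewrite minus_sum, decomp_sum by lia. simpl pred. rewrite tech5.
  assert (Hf0 : f 0%nat = 0) by (unfold f; rewrite B_m1; ring).
  assert (Hg : g (S n) = 0) by (unfold g; rewrite B_out; ring).
  rewrite Hf0, Hg.
  replace (0 + sum_f_R0 (fun i => f (S i)) n - (sum_f_R0 g n + 0))
    with (sum_f_R0 (fun i => f (S i) - g i) n) by (rewrite minus_sum; ring).
  rewrite (sum_eq _ (fun i => C n i * x ^ i * (1 - x) ^ (n - i) * (1 / INR (S n)))).
  2:{ intros i Hi. unfold f, g. rewrite B_S, B_in by lia. rewrite !S_INR.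
      rewrite S_INR in HN. field. lra. }
  rewrite <- scal_sum, <- binomial. replace (x + (1-x)) with 1 by ring.
  rewrite pow1. ring.
Qed.
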